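(* Let $(X,d)$ be a bounded metric space and $\ell:X\to[0,+\infty)$ a bounded lower semicontinuous function with $\inf_X\ell=0$. For $\lambda\ge0$ let $u_\lambda$ denote the Perron solution of $(\mathcal{G}_\lambda)$. Then: (a) $u_\lambda\to u_0$ uniformly as $\lambda\to0$; (b) if $X$ is compact and $\alpha>0$, then $u_\lambda\to u_\alpha$ uniformly as $\lambda\to\alpha$.
   Context: Global slope: $G[u](x)=\sup_{y\neq x}\frac{(u(x)-u(y))_+}{d(x,y)}$ if $u(x)<+\infty$, $G[u](x)=+\infty$ otherwise. A solution of $(\mathcal{G}_\lambda)$ is a lower semicontinuous $u$ with $\inf_Xu=0$ and $\lambda u+G[u]=\ell$ on $X$; the Perron solution is the solution that is pointwise maximal among all solutions. *)

(* Defs.v *)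
From mathcomp Require Import all_boot all_order all_algebra.
From mathcomp Require Import all_classical all_reals.
From mathcomp Require Import ereal.
Set Implicit Arguments. Unset Strict Implicit. Unset Printing Implicit Defensive.
Import Order.TTheory GRing.Theory Num.Theory.
Local Open Scope classical_set_scope.
Local Open Scope ring_scope.

Definition is_metric (R : realType) (X : Type) (d : X -> X -> R) : Prop :=
  (forall x y, 0 <= d x y) /\
  (forall x y, d x y = 0 <-> x = y) /\
  (forall x y, d x y = d y x) /\
  (forall x y z, d x z <= d x y + d y z).

Definition metric_bounded (R : realType) (X : Type) (d : X -> X -> R) : Prop :=
  exists M : R, forall x y, d x y <= M.

Definition d_open (R : realType) (X : Type) (d : X -> X -> R) (A : set X) : Prop :=
  forall x, A x -> exists2 e : R, 0 < e & forall y, d x y < e -> A y.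

Definition d_compact (R : realType) (X : Type) (d : X -> X -> R) : Prop :=
  forall (I : Type) (U : I -> set X),
    (forall i, d_open d (U i)) -> (forall x, exists i, U i x) ->
    exists F : set I, finite_set F /\ forall x, exists2 i, F i & U i x.

Definition d_lsc (R : realType) (X : Type) (d : X -> X -> R) (u : X -> \bar R) : Prop :=
  forall x (a : R), (a%:E < u x)%E ->
    exists2 e : R, 0 < e & forall y, d x y < e -> (a%:E < u y)%E.

(* The supremum is taken together with 0 (all the
   quotients are >= 0, so this only fixes the value 0 on an empty index set). *)
Definition global_slope (R : realType) (X : Type) (d : X -> X -> R)
    (u : X -> \bar R) (x : X) : \bar R :=
  if u x == +oo%E then +oo%E
  else ereal_sup ([set 0%E] `|`
         [set (maxe (u x - u y) 0 * ((d x y)^-1)%:E)%E | y in [set y | y <> x]]).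

Definition is_solution (R : realType) (X : Type) (d : X -> X -> R)
    (ell : X -> R) (lam : R) (u : X -> \bar R) : Prop :=
  d_lsc d u /\ ereal_inf (range u) = 0%E /\
  forall x, (lam%:E * u x + global_slope d u x)%E = (ell x)%:E.

Definition is_perron_solution (R : realType) (X : Type) (d : X -> X -> R)
    (ell : X -> R) (lam : R) (u : X -> \bar R) : Prop :=
  is_solution d ell lam u /\
  forall v, is_solution d ell lam v -> forall x, (v x <= u x)%E.

Definition unif_conv_at (R : realType) (X : Type) (u : R -> X -> \bar R) (a : R) : Prop :=
  forall eps : R, 0 < eps -> exists2 delta : R, 0 < delta &
    forall lam : R, 0 <= lam -> `|lam - a| < delta ->
      forall x, (`|u lam x - u a x| < eps%:E)%E.

(* Main.v *)
Require Import Defs.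
From mathcomp Require Import all_boot all_order all_algebra.
From mathcomp Require Import all_classical all_reals.
From mathcomp Require Import ereal.
From mathcomp Require Import ring lra.
Set Implicit Arguments. Unset Strict Implicit. Unset Printing Implicit Defensive.
Import Order.TTheory GRing.Theory Num.Theory.
Local Open Scope classical_set_scope.
Local Open Scope ring_scope.

Definition subsol (R : realType) (X : Type) (d : X -> X -> R) (ell : X -> R)
  (lam : R) (v : X -> R) : Prop :=
  (forall x, 0 <= v x) /\ (forall x, lam * v x <= ell x) /\
  (forall x y, x <> y -> lam * v x + (v x - v y) / d x y <= ell x) /\
  (forall e, 0 < e -> exists z, v z < e).

Lemma dpos (R : realType) (X : Type) (d : X -> X -> R) x y :
  is_metric d -> x <> y -> 0 < d x y.
Proof.
move=> [h0 [h1 _]] nxy; rewrite lt_def h0 andbT; apply/eqP => /h1; exact: nxy.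
Qed.

Lemma dxx (R : realType) (X : Type) (d : X -> X -> R) x :
  is_metric d -> d x x = 0.
Proof. by move=> [_ [h1 _]]; apply/h1. Qed.

Lemma subsol_diff (R : realType) (X : Type) (d : X -> X -> R) (ell : X -> R) lam v :
  is_metric d -> 0 <= lam -> subsol d ell lam v -> forall x y, v x - v y <= ell x * d x y.
Proof.
move=> hm hl [v0 [v1 [v2 _]]] x y.
case: (pselect (x = y)) => [->|nxy']; first by rewrite subrr dxx // mulr0.
have dp := dpos hm nxy'.
have h1 := v2 x y nxy'.
have : 0 <= lam * v x by apply: mulr_ge0.
move=> h0; have : (v x - v y) / d x y <= ell x by lra.
by rewrite ler_pdivrMr.
Qed.

Lemma subsol_bound (R : realType) (X : Type) (d : X -> X -> R) (ell : X -> R) lam v D :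
  is_metric d -> 0 <= lam -> (forall x y, d x y <= D) -> (forall x, 0 <= ell x) ->
  subsol d ell lam v -> forall x, v x <= D * ell x.
Proof.
move=> hm hl hD hell hs x; have hdf := subsol_diff hm hl hs.
case: hs => [_ [_ [_ hinf]]].
rewrite leNgt; apply/negP => hlt.
have hp : 0 < v x - D * ell x by rewrite subr_gt0.
have [z hz] := hinf _ hp.
have := hdf x z; have := hD x z; have := hell x.
move=> h1 h2 h3.
have : ell x * d x z <= ell x * D by apply: ler_wpM2l.
lra.
Qed.

Lemma subsol_mono (R : realType) (X : Type) (d : X -> X -> R) (ell : X -> R) lam mu v :
  is_metric d -> 0 <= lam -> lam <= mu -> subsol d ell mu v -> subsol d ell lam v.
Proof.
move=> hm hl hlm [v0 [v1 [v2 v3]]]; split => //; split; [|split] => //.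
- move=> x; have := v1 x; have : lam * v x <= mu * v x by apply: ler_wpM2r.
  lra.
- move=> x y nxy; have := v2 x y nxy; have : lam * v x <= mu * v x by apply: ler_wpM2r.
  lra.
Qed.

Lemma subsol_scale (R : realType) (X : Type) (d : X -> X -> R) (ell : X -> R) lam mu v D :
  is_metric d -> 0 <= lam -> lam <= mu -> 0 <= D -> (forall x y, d x y <= D) ->
  (forall x, 0 <= ell x) ->
  subsol d ell lam v -> subsol d ell mu (fun x => v x / (1 + (mu - lam) * D)).
Proof.
move=> hm hl hlm hD0 hD hell hs.
have hb := subsol_bound hm hl hD hell hs.
have hdf := subsol_diff hm hl hs.
case: hs => [v0 [v1 [v2 v3]]].
have sp : 0 < 1 + (mu - lam) * D.
  have : 0 <= (mu - lam) * D by apply: mulr_ge0 => //; lra.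
  lra.
set s := 1 + (mu - lam) * D.
have key : forall x, mu * v x <= lam * v x + (mu - lam) * D * ell x.
  move=> x; have := hb x; have := v0 x.
  have : 0 <= mu - lam by lra.
  move=> h1 h2 h3.
  have : (mu - lam) * v x <= (mu - lam) * (D * ell x) by apply: ler_wpM2l.
  rewrite mulrA. lra.
split; [|split; [|split]].
- by move=> x; apply: divr_ge0 => //; apply: ltW.
- move=> x; rewrite mulrA ler_pdivrMr //.
  have := key x; have := v1 x; have := hell x; rewrite /s.
  move=> h1 h2 h3.
  have : lam * v x <= ell x * 1 by lra.
  move=> h4; nra.
- move=> x y nxy.
  have dp := dpos hm nxy.
  have e1 : mu * (v x / s) + (v x / s - v y / s) / d x y =
           (mu * v x + (v x - v y) / d x y) / s.
    have sn : s != 0 by rewrite lt0r_neq0.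
    have dn : d x y != 0 by rewrite lt0r_neq0.
    by field; rewrite sn dn.
  rewrite e1 ler_pdivrMr //.
  have := key x; have := v2 x y nxy; rewrite /s => h1 h2.
  have : lam * v x + (v x - v y) / d x y <= ell x by [].
  nra.
- move=> e he; have [z hz] := v3 e he; exists z.
  rewrite ltr_pdivrMr //.
  have : 0 <= (mu - lam) * D by apply: mulr_ge0 => //; lra.
  rewrite /s => h; nra.
Qed.

Lemma elem_eq (R : realType) (a b c : R) :
  (maxe (a%:E - b%:E) 0 * c%:E)%E = (Num.max (a - b) 0 * c)%:E.
Proof. by rewrite -EFinB (_ : 0%E = (0%R)%:E) // -EFin_max -EFinM. Qed.

Lemma gs_eq (R : realType) (X : Type) (d : X -> X -> R) (w : X -> R) x :
  global_slope d (fun z => (w z)%:E) x =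
  ereal_sup ([set 0%E] `|` [set (Num.max (w x - w y) 0 * (d x y)^-1)%:E | y in [set y | y <> x]]).
Proof.
rewrite /global_slope (_ : ((w x)%:E == +oo)%E = false) //.
congr ereal_sup; congr (_ `|` _); apply/seteqP; split => z [y hy <-]; exists y => //;
  by rewrite elem_eq.
Qed.

Lemma gs_ge0 (R : realType) (X : Type) (d : X -> X -> R) (w : X -> R) x :
  (0 <= global_slope d (fun z => (w z)%:E) x)%E.
Proof. by rewrite gs_eq; apply: ereal_sup_ubound; left. Qed.

Lemma gs_ub (R : realType) (X : Type) (d : X -> X -> R) (w : X -> R) x y :
  x <> y -> ((Num.max (w x - w y) 0 / d x y)%:E <= global_slope d (fun z => (w z)%:E) x)%E.
Proof.
move=> nxy; rewrite gs_eq; apply: ereal_sup_ubound; right; exists y => //.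
by move=> h; apply: nxy.
Qed.

Lemma gs_le (R : realType) (X : Type) (d : X -> X -> R) (w : X -> R) x c :
  0 <= c -> (forall y, x <> y -> Num.max (w x - w y) 0 / d x y <= c) ->
  (global_slope d (fun z => (w z)%:E) x <= c%:E)%E.
Proof.
move=> c0 hc; rewrite gs_eq; apply: ge_ereal_sup => z [->|[y hy <-]]; rewrite ?lee_fin //.
by apply: hc => h; apply: hy.
Qed.

Lemma inf0_small (R : realType) (X : Type) (f : X -> R) :
  ereal_inf (range (fun x => (f x)%:E)) = 0%E -> forall e, 0 < e -> exists z, f z < e.
Proof.
move=> h e he.
have : (ereal_inf (range (fun x => (f x)%:E)) < e%:E)%E by rewrite h lte_fin.
by case/ereal_inf_lt => _ [z _ <-]; rewrite lte_fin => hz; exists z.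
Qed.

Lemma inf0_of (R : realType) (X : Type) (f : X -> R) :
  (forall x, 0 <= f x) -> (forall e, 0 < e -> exists z, f z < e) ->
  ereal_inf (range (fun x => (f x)%:E)) = 0%E.
Proof.
move=> h0 hs; apply/le_anti/andP; split; last first.
  by apply: le_ereal_inf_tmp => _ [z _ <-]; rewrite lee_fin.
have lb : forall z, (ereal_inf (range (fun x => (f x)%:E)) <= (f z)%:E)%E.
  by move=> z; apply: ereal_inf_lbound; exists z.
case E: (ereal_inf _) lb => [r| |] lb //.
- rewrite lee_fin leNgt; apply/negP => rp.
  have [z hz] := hs r rp; have := lb z; rewrite lee_fin => h.
  by move: hz; rewrite ltNge h.
- have [z hz] := hs 1 ltr01; have := lb z; by [].
Qed.

Lemma eq_slope (R : realType) (a b : R) (G : \bar R) :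
  (0 <= G)%E -> (a%:E + G = b%:E)%E -> G = (b - a)%:E.
Proof.
case: G => [g| |] //= _.
- by rewrite -EFinD => -[<-]; congr EFin; ring.
Qed.

Lemma sol_sub (R : realType) (X : Type) (d : X -> X -> R) (ell : X -> R) lam u :
  is_metric d -> 0 <= lam -> is_solution d ell lam u ->
  (forall x, u x = (fine (u x))%:E) /\ subsol d ell lam (fun x => fine (u x)).
Proof.
move=> hm hl [_ [hinf heq]].
have u0 : forall x, (0 <= u x)%E by move=> x; rewrite -hinf; apply: ereal_inf_lbound; exists x.
have Eu : forall x, u x = (fine (u x))%:E.
  move=> x; have := heq x; have := u0 x; rewrite /global_slope.
  case E: (u x) => [r| |] //= _.
  rewrite addey //.
  have : (0 <= lam%:E * +oo)%E by apply: mule_ge0; rewrite ?lee_fin.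
  by case: (lam%:E * +oo)%E.
split => //.
set w := fun x => fine (u x).
have Eu' : u = (fun z => (w z)%:E) by apply: funext.
rewrite Eu' in hinf heq u0.
have hG : forall x, global_slope d (fun z => (w z)%:E) x = (ell x - lam * w x)%:E.
  move=> x; apply: eq_slope; first exact: gs_ge0.
  by rewrite EFinM; apply: heq.
split; [|split; [|split]].
- by move=> x; have := u0 x; rewrite lee_fin.
- move=> x; have := gs_ge0 d w x; rewrite hG lee_fin => h; lra.
- move=> x y nxy.
  have := gs_ub d w nxy; rewrite hG lee_fin => h.
  have : (w x - w y) / d x y <= Num.max (w x - w y) 0 / d x y.
    apply: ler_wpM2r; first by rewrite invr_ge0 ltW // (dpos hm nxy).
    by rewrite le_max lexx.
  lra.
- exact: inf0_small.
Qed.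

Lemma bump_lemma (R : realType) (X : Type) (d : X -> X -> R) (ell : X -> R) lam W D x0 g0 :
  is_metric d -> 0 <= lam -> 0 < D -> (forall x y, d x y <= D) -> (forall x, 0 <= ell x) ->
  ereal_inf (range (fun x => (ell x)%:E)) = 0%E -> d_lsc d (fun x => (ell x)%:E) ->
  subsol d ell lam W -> 0 <= g0 -> (forall y, W x0 - W y <= g0 * d x0 y) ->
  g0 < ell x0 - lam * W x0 ->
  exists W', subsol d ell lam W' /\ W x0 < W' x0.
Proof.
move=> hm hl hD0 hD hell hinf hlsc hW hg0 hW0 hgap.
have hWb := subsol_bound hm hl hD hell hW.
have hWd := subsol_diff hm hl hW.
have hWs := hW; case: hWs => [w0 [w1 [w2 w3]]].
have [dge0 [_ [dsym dtri]]] := hm.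
set g := ell x0 - lam * W x0 - g0.
have gp : 0 < g by rewrite /g; lra.
have [r rp hr] : exists2 r : R, 0 < r & forall y, d x0 y < r -> ell x0 - g / 4 < ell y.
  have : ((ell x0 - g / 4)%:E < (ell x0)%:E)%E by rewrite lte_fin; lra.
  case/hlsc => r rp hr; exists r => // y /hr; by rewrite lte_fin.
set dl := Num.min (g / (4 * (lam + 1))) (g * r / 4).
have dlp : 0 < dl by rewrite lt_min; apply/andP; split; apply: divr_gt0 => //;
  [lra | apply: mulr_gt0 => //].
have dl1 : (lam + 1) * dl <= g / 4.
  have : dl <= g / (4 * (lam + 1)) by rewrite ge_min lexx.
  rewrite ler_pdivlMr; last lra.
  move=> h; lra.
have dl2 : dl <= g * r / 4 by rewrite ge_min lexx orbT.
set k := g0 + g / 2.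
set phi := fun y => W x0 + dl - k * d x0 y.
set W' := fun y => Num.max (W y) (phi y).
have F1 : forall y, W y < phi y -> ell x0 - g / 4 < ell y.
  move=> y hy; apply: hr.
  have := hW0 y; have := dge0 x0 y; rewrite /phi /k in hy => h1 h2.
  have : g / 2 * d x0 y < dl by lra.
  move=> h3; nra.
have ellx0 : g <= ell x0.
  have : 0 <= lam * W x0 by apply: mulr_ge0.
  rewrite /g; lra.
have lamphi : forall y, lam * phi y <= lam * W x0 + g / 4.
  move=> y; rewrite /phi.
  have : 0 <= lam * (k * d x0 y) by apply: mulr_ge0 => //; apply: mulr_ge0 => //; rewrite /k; lra.
  have : lam * dl <= g / 4 by lra.
  move=> h1 h2; rewrite !mulrDr mulrN; lra.
exists W'; split; last first.
  rewrite /W' /phi dxx // mulr0 subr0 lt_max; apply/orP; right; lra.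
split; [|split; [|split]].
- by move=> x; rewrite /W' le_max w0.
- move=> x; rewrite /W'; case: (leP (W x) (phi x)) => hx.
    idtac.
    have [e|hlt] := eqVneq (W x) (phi x); first by rewrite -e.
    have hlt' : W x < phi x by rewrite lt_neqAle hlt hx.
    have := F1 x hlt'; have := lamphi x; rewrite /g; lra.
  + by [].

- move=> x y nxy; have dp := dpos hm nxy.
  rewrite /W'; case: (ltP (W x) (phi x)) => hx.
  + idtac.
    have h1 : (phi x - Num.max (W y) (phi y)) / d x y <= k.
      rewrite ler_pdivrMr //.
      have : phi y <= Num.max (W y) (phi y) by rewrite le_max lexx orbT.
      have := dtri x0 x y; rewrite /phi => h2 h3.
      have : 0 <= k by rewrite /k; lra.
      move=> h4; nra.
    have eg : g = ell x0 - lam * W x0 - g0 by [].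
    have := F1 x hx; have := lamphi x; rewrite /k in h1; lra.
  + idtac.
    have h1 : (W x - Num.max (W y) (phi y)) / d x y <= (W x - W y) / d x y.
      apply: ler_wpM2r; first by rewrite invr_ge0 ltW.
      have : W y <= Num.max (W y) (phi y) by rewrite le_max lexx.
      lra.
    have := w2 x y nxy; lra.
- move=> e ep.
  have mp : 0 < Num.min (e / D) (g / 2).
    by rewrite lt_min; apply/andP; split; apply: divr_gt0.
  have [z hz] := inf0_small hinf mp.
  exists z; rewrite /W'.
  have hz1 : ell z < e / D by move: hz; rewrite lt_min => /andP[].
  have hz2 : ell z < g / 2 by move: hz; rewrite lt_min => /andP[].
  case: (leP (W z) (phi z)) => hzp.
  + have [e'|hlt] := eqVneq (W z) (phi z).
      rewrite -e'.
      have := hWb z; move: hz1; rewrite ltr_pdivlMr // => h1 h2; lra.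
    have hlt' : W z < phi z by rewrite lt_neqAle hlt hzp.
    have := F1 z hlt'; lra.
  + idtac.
    have := hWb z; move: hz1; rewrite ltr_pdivlMr // => h1 h2; lra.
Qed.

Lemma perron_dom (R : realType) (X : Type) (d : X -> X -> R) (ell : X -> R) lam u D :
  is_metric d -> 0 <= lam -> 0 < D -> (forall x y, d x y <= D) -> (forall x, 0 <= ell x) ->
  (exists M : R, forall x, ell x <= M) ->
  d_lsc d (fun x => (ell x)%:E) -> ereal_inf (range (fun x => (ell x)%:E)) = 0%E ->
  is_perron_solution d ell lam u ->
  forall v, subsol d ell lam v -> forall x, ((v x)%:E <= u x)%E.
Proof.
move=> hm hl hD0 hD hell [M hM] hlsc hinf [_ hmax] v hv x.
set C := [set v | subsol d ell lam v].
set W := fun x => sup [set v x | v in C].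
have zC : C (fun _ => 0).
  split; first by [].
  split; first by move=> y; rewrite mulr0.
  split; first by move=> y z _; rewrite mulr0 subrr mul0r addr0.
  move=> e ep; have [z _] := inf0_small hinf ltr01; by exists z.
have hne : forall x, [set v x | v in C] !=set0.
  by move=> y; exists 0, (fun _ => 0).
have hub : forall x, has_ubound [set v x | v in C].
  move=> y; exists (D * ell y) => _ [w hw <-]; exact: subsol_bound hm hl hD hell hw y.
have le_W : forall w y, C w -> w y <= W y.
  by move=> w y hw; apply: (ub_le_sup (hub y)); exists w.
have W_le : forall y b, (forall w, C w -> w y <= b) -> W y <= b.
  by move=> y b hb; apply: ge_sup => // _ [w hw <-]; apply: hb.
have WC : C W.
  split; [|split; [|split]].
  - by move=> y; apply: (le_W (fun _ => 0)).
  - move=> y; have [->|ln0] := eqVneq lam 0; first by rewrite mul0r.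
    have lp : 0 < lam by rewrite lt_neqAle eq_sym ln0 hl.
    have : W y <= ell y / lam.
      apply: W_le => w [_ [w1 _]]; rewrite ler_pdivlMr // mulrC; exact: w1.
    by rewrite ler_pdivlMr // mulrC.
  - move=> y z nyz; have dp := dpos hm nyz.
    have ip : 0 < (d y z)^-1 by rewrite invr_gt0.
    have cp : 0 < lam + (d y z)^-1 by lra.
    have : W y <= (ell y + W z / d y z) / (lam + (d y z)^-1).
      apply: W_le => w hw; rewrite ler_pdivlMr //.
      have := hw; case => [_ [_ [w2 _]]].
      have := w2 y z nyz; have := le_W w z hw.
      move=> h1 h2.
      have : w z / d y z <= W z / d y z by apply: ler_wpM2r => //; apply: ltW.
      rewrite mulrBl in h2; rewrite mulrDr; lra.
    rewrite ler_pdivlMr // => h.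
    rewrite mulrBl; rewrite mulrDr in h; lra.
  - move=> e ep.
    have [z hz] := inf0_small hinf (divr_gt0 ep hD0).
    exists z; have : W z <= D * ell z.
      by apply: W_le => w hw; apply: (subsol_bound hm hl hD hell hw z).
    move: hz; rewrite ltr_pdivlMr // => h1 h2; lra.
have hWd := subsol_diff hm hl WC.
have WCs := WC; case: WCs => [w0 [w1 [w2 w3]]].
have Wsol : is_solution d ell lam (fun y => (W y)%:E).
  split; [|split].
  - move=> y a; rewrite lte_fin => ha.
    pose M1 := `|M| + 1.
    have M1p : 0 < M1 by rewrite /M1; have := normr_ge0 M; lra.
    have hM1 : forall z, ell z <= M1.
      by move=> z; have := hM z; have := ler_norm M; rewrite /M1; lra.
    exists ((W y - a) / M1); first by apply: divr_gt0 => //; lra.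
    move=> z; rewrite ltr_pdivlMr // => hz; rewrite lte_fin.
    have := hWd y z; have := hM1 y; have := (proj1 hm) y z.
    move=> h1 h2 h3.
    have : ell y * d y z <= M1 * d y z by apply: ler_wpM2r.
    rewrite mulrC in hz; lra.
  - exact: inf0_of.
  - move=> y.
    have Gle : (global_slope d (fun z => (W z)%:E) y <= (ell y - lam * W y)%:E)%E.
      apply: gs_le; first by have := w1 y; lra.
      move=> z nyz; have dp := dpos hm nyz.
      case: (leP (W y - W z) 0) => hc.
      + by rewrite mul0r; have := w1 y; lra.
      + have := w2 y z nyz; lra.
    have G0 := gs_ge0 d W y.
    have Gfin : global_slope d (fun z => (W z)%:E) y \is a fin_num.
      rewrite fin_numE; apply/andP; split.
      - by move: G0; case: (global_slope _ _ _).
      - by move: Gle; case: (global_slope _ _ _).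
    rewrite -(fineK Gfin) in Gle G0 *.
    set g := fine _ in Gle G0 *.
    rewrite lee_fin in Gle; have G0r : 0 <= g by rewrite -lee_fin.
    have eg : g = ell y - lam * W y.
      apply/eqP; rewrite eq_le Gle /=; rewrite leNgt; apply/negP => hlt.
      have hWg : forall z, W y - W z <= g * d y z.
        move=> z; case: (pselect (y = z)) => [<-|nyz].
          by rewrite subrr dxx // mulr0.
        have dp := dpos hm nyz.
        have := gs_ub d W nyz; rewrite -(fineK Gfin) lee_fin -/g.
        rewrite ler_pdivrMr // => h.
        have : W y - W z <= Num.max (W y - W z) 0 by rewrite le_max lexx.
        lra.
      have [W' [hW' hlt']] := bump_lemma hm hl hD0 hD hell hinf hlsc WC G0r hWg hlt.
      have := le_W W' y hW'; rewrite leNgt hlt' //.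
    by rewrite eg -EFinM -EFinD; congr EFin; ring.
have := hmax _ Wsol x.
have := le_W v x hv.
move=> h1 h2; apply: le_trans h2; rewrite lee_fin; exact: h1.
Qed.
Unset Implicit Arguments. Set Strict Implicit.

Theorem corollary5p6 (R : realType) (X : Type) (d : X -> X -> R) (ell : X -> R)
  (u : R -> X -> \bar R) :
  is_metric d -> metric_bounded d ->
  (forall x, 0 <= ell x) -> (exists M : R, forall x, ell x <= M) ->
  d_lsc d (fun x => (ell x)%:E) -> ereal_inf (range (fun x => (ell x)%:E)) = 0%E ->
  (forall lam : R, 0 <= lam -> is_perron_solution d ell lam (u lam)) ->
  unif_conv_at u 0 /\
  (d_compact d -> forall alpha : R, 0 < alpha -> unif_conv_at u alpha).
Proof.
move=> hm [Dm hDm] hell hMex hlsc hinf hP.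
have [M hM] := hMex.
pose D := `|Dm| + 1.
have hD0 : 0 < D by rewrite /D; have := normr_ge0 Dm; lra.
have hD : forall x y, d x y <= D.
  by move=> x y; have := hDm x y; have := ler_norm Dm; rewrite /D; lra.
pose M1 := `|M| + 1.
have M1p : 0 < M1 by rewrite /M1; have := normr_ge0 M; lra.
have hM1 : forall z, ell z <= M1.
  by move=> z; have := hM z; have := ler_norm M; rewrite /M1; lra.
pose ur := fun lam x => fine (u lam x).
have Eu : forall lam, 0 <= lam -> forall x, u lam x = (ur lam x)%:E.
  by move=> lam hl; have [] := sol_sub hm hl (proj1 (hP lam hl)).
have Su : forall lam, 0 <= lam -> subsol d ell lam (ur lam).
  by move=> lam hl; have [] := sol_sub hm hl (proj1 (hP lam hl)).
pose K := D * D * M1.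
have Kp : 0 < K by rewrite /K; apply: mulr_gt0 => //; apply: mulr_gt0.
have step : forall lam mu x, 0 <= lam -> lam <= mu ->
    0 <= ur lam x - ur mu x <= (mu - lam) * K.
  move=> lam mu x hl hlm.
  have hmu : 0 <= mu by lra.
  have A : ur mu x <= ur lam x.
    have := perron_dom hm hl hD0 hD hell hMex hlsc hinf (hP lam hl)
      (subsol_mono hm hl hlm (Su mu hmu)) x.
    by rewrite Eu // lee_fin.
  have B : ur lam x / (1 + (mu - lam) * D) <= ur mu x.
    have := perron_dom hm hmu hD0 hD hell hMex hlsc hinf (hP mu hmu)
      (subsol_scale hm hl hlm (ltW hD0) hD hell (Su lam hl)) x.
    by rewrite (Eu mu) // lee_fin.
  have C : ur lam x <= D * M1.
    apply: (le_trans (subsol_bound hm hl hD hell (Su lam hl) x)).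
    by apply: ler_wpM2l; [apply: ltW | apply: hM1].
  have s0 : 0 <= (mu - lam) * D by apply: mulr_ge0; lra.
  move: B; rewrite ler_pdivrMr; last lra.
  have b0 : 0 <= ur mu x by case: (Su mu hmu).
  move=> B; apply/andP; split; first lra.
  have h1 : ur mu x * ((mu - lam) * D) <= ur lam x * ((mu - lam) * D) by apply: ler_wpM2r.
  have h2 : ur lam x * ((mu - lam) * D) <= D * M1 * ((mu - lam) * D) by apply: ler_wpM2r.
  have e : D * M1 * ((mu - lam) * D) = (mu - lam) * K by rewrite /K; ring.
  rewrite mulrDr mulr1 in B; lra.
have conv : forall a, 0 <= a -> unif_conv_at u a.
  move=> a ha eps he.
  exists (eps / K); first by apply: divr_gt0.
  move=> lam hl hla x.
  rewrite (Eu lam hl) (Eu a ha) -EFinB /= lte_fin.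
  have edK : eps / K * K = eps by field; rewrite lt0r_neq0.
  move: hla; rewrite ltr_norml => /andP[h1 h2].
  rewrite ltr_norml; apply/andP.
  case: (leP lam a) => hc.
  - have := step lam a x hl hc => /andP[s1 s2].
    have : (a - lam) * K < eps by rewrite -edK ltr_pM2r //; lra.
    move=> h3; split; lra.
  - have := step a lam x ha (ltW hc) => /andP[s1 s2].
    have : (lam - a) * K < eps by rewrite -edK ltr_pM2r //; lra.
    move=> h3; split; lra.
split; first exact: conv.
by move=> _ alpha hal; apply: conv; apply: ltW.
Qed.
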